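(* Let $q\ge2$, $G\in\mathbb G^q$ and $S=\Psi(G)$. Let $v$ be a vertex of color $i\in\{1,\dots,q\}$ of $S$, and let $e,e'$ be the color-$i$ edges of $G$ corresponding to two corners of $v$. These two corners split the set of edges incident to $v$ into two (cyclic-interval) sets $V_a$ and $V_b$. Suppose that for one of these sets, say $V_a$, every edge $a\in V_a$, with white endpoint $w_a$, is a bridge of $S$ such that the connected component of $S\setminus a$ containing $w_a$ is a tree. Then there exists a path in $G$ containing both $e$ and $e'$ and no edge of color $0$.
   Context: Fix an integer $q\ge 2$. A $(q+1)$-edge-colored graph (colored graph) is a finite connected graph, multiple edges allowed and no loops, whose edges carry colors in $\{0,1,\dots,q\}$ such that every vertex is incident to exactly one edge of each color. It is rooted if one color-0 edge is distinguished and oriented; it is bipartite if its vertices can be colored black and white so that every edge joins a black and a white vertex, with the convention that the origin of the root edge is black. $\mathbb G^q$ denotes the set of rooted bipartite colored graphs. Constellations: given $G\in\mathbb G^q$, its constellation $S=\Psi(G)$ is obtained as follows: orient every edge from its black to its white endpoint; contract every color-0 edge into a single vertex, called a white vertex of $S$. For each $i\in\{1,\dots,q\}$ the color-$i$ edges now form directed cycles; for each such cycle, passing through white vertices $w_1,\dots,w_p$ in this cyclic order, add a new vertex of color $i$ joined by one color-$i$ edge to each $w_k$, equip the new vertex with the cyclic order $(w_1,\dots,w_p)$ of its incident edges, and delete the original color-$i$ edges of the cycle. The corner of this color-$i$ vertex between its edges to $w_k$ and $w_{k+1}$ (indices mod $p$) is said to correspond to the original color-$i$ edge of $G$ directed from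 (the black endpoint of the color-0 edge) $w_k$ to (the white endpoint of the color-0 edge) $w_{k+1}$. *)

(* Defs.v *)
From mathcomp Require Import all_boot.
Set Implicit Arguments. Unset Strict Implicit. Unset Printing Implicit Defensive.

(* Since every vertex is incident
   to exactly one edge of each color and there are no loops, the color-i edges
   form a perfect matching, encoded by a fixed-point-free involution [sigma i];
   the color-i edge at x is {x, sigma i x}.  Multiple edges (of different
   colors) between two vertices are allowed.  The root is the color-0 edge
   {root, sigma ord0 root}, oriented from [root], which is black. *)
Record cgraph (q : nat) := CGraph {
  vert : finType;
  sigma : 'I_q.+1 -> vert -> vert;
  sigma_invol : forall i, involutive (sigma i);
  sigma_noloop : forall i x, sigma i x != x;
  cg_connected : forall x y,
      connect (fun u v => [exists i, sigma i u == v]) x y;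
  black : vert -> bool;
  black_bip : forall i x, black (sigma i x) = ~~ black x;
  root : vert;
  root_black : black root
}.

Arguments sigma {q} c i x.
Arguments black {q} c x.

Section Constellation.
Variables (q : nat) (G : cgraph q).
Local Notation V := (vert G).
Local Notation sgm := (@sigma q G).

(* A color-i edge of G is identified by (its color and) its black endpoint.
   The white vertex of S coming from the color-0 edge {b, sgm 0 b} is identified
   by the black endpoint b.  The color-i edge from b (black) goes to the white
   endpoint of the color-0 edge of [cpi i b]; the color-i vertices of S are the
   cycles of [cpi i] on black vertices. *)
Definition cpi (i : 'I_q.+1) : V -> V := fun x => sgm ord0 (sgm i x).

Definition orbit_set (i : 'I_q.+1) (b : V) : {set V} :=
  [set y | fconnect (cpi i) b y].

(* Vertices of S: inl b = white vertex (color-0 edge with black endpoint b);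
   inr (i, O) = color-i vertex whose cycle of white vertices is O. *)
Definition SV := (V + ('I_q.+1 * {set V}))%type.

Definition Sarc (x y : SV) : bool :=
  match x, y with
  | inl b, inr (i, Os) => [&& black G b, i != ord0 & Os == orbit_set i b]
  | _, _ => false
  end.

Definition Sadj : rel SV := fun x y => Sarc x y || Sarc y x.

Definition Sdel (u v : SV) : rel SV :=
  fun x y => Sadj x y && ~~ (((x == u) && (y == v)) || ((x == v) && (y == u))).

Definition bridge_tree_side (w : V) (v : SV) : Prop :=
  Sadj (inl w) v /\
  ~~ connect (Sdel (inl w) v) (inl w) v /\
  (forall c : seq SV, 3 <= size c -> uniq c -> cycle (Sdel (inl w) v) c ->
     all (connect (Sdel (inl w) v) (inl w)) c -> False).

(* the white endpoints of the edges of the color-i vertex containing b1 that lie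
   strictly between the corner of b1 and the corner of b2 (in the cyclic order):
   cpi b1, cpi^2 b1, ..., b2.  The corner of b is the one between the edges to
   b and to cpi b. *)
Definition corner_arc (i : 'I_q.+1) (b1 b2 : V) : pred V :=
  fun w => [exists k : 'I_(findex (cpi i) b1 b2).+1,
              (0 < k) && (iter k (cpi i) b1 == w)].

(* walks in G: a start vertex and a sequence of colors *)
Fixpoint wverts (x : V) (cs : seq 'I_q.+1) : seq V :=
  match cs with [::] => [:: x] | c :: cs' => x :: wverts (sgm c x) cs' end.
Fixpoint wedges (x : V) (cs : seq 'I_q.+1) : seq (V * 'I_q.+1) :=
  match cs with [::] => [::] | c :: cs' => (x, c) :: wedges (sgm c x) cs' end.

Definition uses_edge (x : V) (cs : seq 'I_q.+1) (i : 'I_q.+1) (b : V) : bool :=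
  has (fun p : V * 'I_q.+1 => (p.2 == i) && ((p.1 == b) || (sgm i p.1 == b)))
      (wedges x cs).

Definition path_no0 (x : V) (cs : seq 'I_q.+1) : bool :=
  uniq (wverts x cs) && all (fun c => c != ord0) cs.

End Constellation.

Arguments cpi {q} G i x.
Arguments orbit_set {q} G i b.
Arguments Sarc {q} G x y.
Arguments Sadj {q} G x y.
Arguments Sdel {q} G u v x y.
Arguments bridge_tree_side {q} G w v.
Arguments corner_arc {q} G i b1 b2 w.
Arguments wverts {q} G x cs.
Arguments wedges {q} G x cs.
Arguments uses_edge {q} G x cs i b.
Arguments path_no0 {q} G x cs.

(* Main.v *)
Require Import Defs.
From mathcomp Require Import all_boot.
Set Implicit Arguments. Unset Strict Implicit. Unset Printing Implicit Defensive.

Section Aux.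
Variables (q : nat) (G : cgraph q).
Local Notation V := (vert G).
Local Notation sg := (sigma G).
Local Notation o := (@ord0 q).

Lemma sgK c : involutive (sg c). Proof. exact: sigma_invol. Qed.
Lemma sg_inj c : injective (sg c). Proof. exact: inv_inj (sgK c). Qed.
Lemma cpi_inj c : injective (cpi G c).
Proof. by rewrite /cpi => x y /sg_inj /sg_inj. Qed.
Lemma black_cpi c x : black G (cpi G c x) = black G x.
Proof. by rewrite /cpi !black_bip negbK. Qed.
Lemma orbit_set_cpi c x : orbit_set G c (cpi G c x) = orbit_set G c x.
Proof. by apply/setP=> y; rewrite /orbit_set !inE -(same_fconnect1 (@cpi_inj c)). Qed.
Lemma orbit_set_iter c n x : orbit_set G c (iter n (cpi G c) x) = orbit_set G c x.
Proof. by elim: n => //= n IH; rewrite orbit_set_cpi. Qed.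
Lemma orbit_set_conn c x y : fconnect (cpi G c) x y -> orbit_set G c y = orbit_set G c x.
Proof. by move=> h; rewrite -(iter_findex h) orbit_set_iter. Qed.
Lemma black_iter c n x : black G (iter n (cpi G c) x) = black G x.
Proof. by elim: n => //= n IH; rewrite black_cpi. Qed.

Definition wend (x : V) (cs : seq 'I_q.+1) := foldl (fun y c => sg c y) x cs.

Lemma wverts_cat x cs1 cs2 :
  wverts G x (cs1 ++ cs2) = wverts G x cs1 ++ behead (wverts G (wend x cs1) cs2).
Proof. by elim: cs1 x => [|c cs IH] x /=; [case: cs2 | rewrite IH]. Qed.

Lemma wedges_cat x cs1 cs2 :
  wedges G x (cs1 ++ cs2) = wedges G x cs1 ++ wedges G (wend x cs1) cs2.
Proof. by elim: cs1 x => [|c cs IH] x //=; rewrite IH. Qed.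

Lemma path_to_walk (E : rel V)
  (HE : forall x y, E x y -> exists2 c, c != o & sg c x = y) x p :
  path E x p -> exists cs, [/\ wverts G x cs = x :: p,
      all (fun c => c != o) cs & wend x cs = last x p].
Proof.
elim: p x => [|y p IH] x /=; first by exists [::].
case/andP=> /HE[c c0 <-] /IH[cs [h1 h2 h3]]; exists (c :: cs) => /=.
by rewrite h1 c0 h3.
Qed.

Lemma eq_inl (a b : V) : (inl a == inl b :> SV G) = (a == b).
Proof. by apply/eqP/eqP => [[]|->]. Qed.

End Aux.

Section Local.
Variables (q : nat) (hq : 2 <= q) (G : cgraph q) (i : 'I_q.+1) (hi : i != ord0)
  (O : {set vert G}).
Local Notation V := (vert G).
Local Notation sg := (sigma G).
Local Notation o := (@ord0 q).
Let v : SV G := inr (i, O).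

Definition Dw (w : V) : rel (SV G) := Sdel G (inl w) v.
Definition Kw (w b : V) := connect (Dw w) (inl w) (inl b).
Definition rep (y : V) := if black G y then y else sg o y.
Definition Rw w y := Kw w (rep y).
Definition Bridge w := [/\ black G w, orbit_set G i w = O & ~~ connect (Dw w) (inl w) v].

Lemma Dw_sym w : symmetric (Dw w).
Proof.
move=> x y; rewrite /Dw /Sdel /Sadj (orbC (Sarc G y x)).
congr (_ && ~~ _); by case: (x == inl w); case: (y == v); case: (x == v); case: (y == inl w).
Qed.

Lemma Kv w b : Bridge w -> Kw w b -> black G b -> b != w -> orbit_set G i b = O -> False.
Proof.
case=> _ _ nc Kb hb bw ho; move/negP: nc; apply.
apply: connect_trans Kb (connect1 _).
rewrite /Dw /Sdel /Sadj /= hb hi ho eqxx /= eq_inl (negbTE bw) /=.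
done.
Qed.

Lemma D_wc w b c : black G b -> c != o -> ~~ ((c == i) && (b == w)) ->
  Dw w (inl b) (inr (c, orbit_set G c b)).
Proof.
move=> hb hc hcb; rewrite /Dw /Sdel /Sadj /= hb hc eqxx /= eq_inl.
case: eqP hcb => [->|] //=; first by move/negbTE->.
move=> ci _; rewrite orbF negb_and; apply/orP; right; rewrite /v.
by apply/eqP => -[/ci].
Qed.

Lemma K_step w b c y : Bridge w -> Kw w b -> black G b -> c != o -> black G y ->
  orbit_set G c y = orbit_set G c b -> ~~ ((c == i) && (b == w)) -> Kw w y.
Proof.
move=> Bw Kb hb hc hy hoy hcb.
have [/andP[/eqP ci yw]|hcy] := boolP ((c == i) && (y == w)).
  exfalso; apply: (Kv Bw Kb hb); first by move: hcb; apply: contra => ->; rewrite ci eqxx.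
  case: Bw => _ <- _; by rewrite -ci -hoy (eqP yw).
apply: connect_trans Kb _; apply: connect_trans (connect1 (D_wc hb hc hcb)) _.
apply: connect1; rewrite Dw_sym -hoy; exact: D_wc.
Qed.

Lemma sg_eq_sym c x y : (sg c x == y) = (x == sg c y).
Proof. by rewrite -[x == _](inj_eq (@sg_inj _ G c)) sgK. Qed.

Lemma Rstep w x c : Bridge w -> Rw w x -> c != o ->
  ~~ ((c == i) && ((x == w) || (x == sg o w))) -> Rw w (sg c x).
Proof.
move=> Bw; rewrite /Rw /rep black_bip; case hx: (black G x) => /= Kx hc hcx.
  apply: (K_step Bw Kx hx hc); rewrite ?black_cpi ?orbit_set_cpi //.
  by move: hcx; apply: contra => /andP[-> ->].
have hb : black G (sg o x) by rewrite black_bip hx.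
apply: (K_step Bw Kx hb hc); first by rewrite black_bip hx.
  rewrite -(orbit_set_cpi c (sg c x)) /cpi sgK //.
by move: hcx; apply: contra => /andP[-> /=]; rewrite sg_eq_sym => ->; rewrite orbT.
Qed.

Definition Ew w : rel V := fun x y =>
  [&& Rw w x, Rw w y & [exists c, (c != o) && (sg c x == y)]].

Lemma Ew_sym w : symmetric (Ew w).
Proof.
move=> x y; rewrite /Ew andbCA; congr [&& _, _ & _].
by apply/existsP/existsP => -[c /andP[h1 h2]]; exists c; rewrite h1 sg_eq_sym eq_sym.
Qed.

Lemma Ew_R w x y : Rw w x -> connect (Ew w) x y -> Rw w y.
Proof.
move=> Rx /connectP[p pp ->]; elim: p x Rx pp => //= z p IH x Rx.
by case/andP=> /and3P[_ Rz _] /IH; apply.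
Qed.

Lemma Ew_all w x p : Rw w x -> path (Ew w) x p -> all (Rw w) (x :: p).
Proof.
elim: p x => [|z p IH] x Rx /=; first by rewrite Rx.
by case/andP=> /and3P[_ Rz _] /(IH _ Rz); rewrite /= Rx => ->.
Qed.

Lemma Rw_w w : Bridge w -> Rw w w.
Proof. by case=> hw _ _; rewrite /Rw /rep hw; apply: connect0. Qed.

Lemma local w : Bridge w -> cpi G i w != w ->
  exists cs, [/\ uniq (wverts G (sg o w) cs), all (fun c => c != o) cs,
     wend (sg o w) cs = w & all (Rw w) (wverts G (sg o w) cs)].
Proof.
move=> Bw cw.
have Rww := Rw_w Bw.
have hw : black G w by case: Bw.
have nRsi : ~~ Rw w (sg i w).
  apply/negP; rewrite /Rw /rep black_bip hw /= => K.
  apply: (Kv Bw K); rewrite ?black_cpi ?orbit_set_cpi //; by case: Bw.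
have [j j0 ji] : exists2 j : 'I_q.+1, j != o & j != i.
  have h1 : (inord 1 : 'I_q.+1) != o.
    by apply/eqP => /(congr1 val); rewrite /= inordK //; exact: (leq_trans hq (leqnSn q)).
  have h2 : (inord 2 : 'I_q.+1) != o.
    by apply/eqP => /(congr1 val); rewrite /= inordK.
  case: (eqVneq i (inord 1)) => h; [exists (inord 2) => // | by exists (inord 1); rewrite // eq_sym].
  by rewrite // h; apply/eqP => /(congr1 val); rewrite /= !inordK //; exact: (leq_trans hq (leqnSn q)).
have conn : connect (Ew w) w (sg o w).
  apply: contraT => nc.
  pose tau := fun x => sg i (sg j x).
  have step : forall k, [&& connect (Ew w) w (iter k tau w),
        black G (iter k tau w) & connect (Ew w) w (sg j (iter k tau w))].
    have stepj : forall y, connect (Ew w) w y -> connect (Ew w) w (sg j y).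
      move=> y cy; have Ry := Ew_R Rww cy.
      have Rz : Rw w (sg j y) by apply: Rstep => //; rewrite (negbTE ji).
      apply: connect_trans cy (connect1 _); rewrite /Ew Ry Rz /=.
      by apply/existsP; exists j; rewrite j0 eqxx.
    elim=> [|k /and3P[_ bk ck]]; first by rewrite connect0 hw stepj ?connect0.
    have Rz := Ew_R Rww ck.
    have bz : black G (sg j (iter k tau w)) = false by rewrite black_bip bk.
    have Rz' : Rw w (sg i (sg j (iter k tau w))).
      apply: Rstep => //; rewrite eqxx /=; apply/negP => /orP[/eqP e| /eqP e].
        by rewrite e hw in bz.
      by move: nc; rewrite -e ck.
    have c' : connect (Ew w) w (iter k.+1 tau w).
      apply: connect_trans ck (connect1 _); rewrite /Ew Rz Rz' /=.
      by apply/existsP; exists i; rewrite hi eqxx.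
    by rewrite c' /= black_bip bz stepj.
  have taui : injective tau by move=> x y /sg_inj /sg_inj.
  have := iter_order taui w; have := order_gt0 tau w.
  case: (order tau w) => // n _; rewrite iterS /tau => e.
  have /and3P[_ _ cz] := step n.
  have Rz := Ew_R Rww cz.
  move: Rz; rewrite -[sg j _](sgK i) e => Rz; by rewrite Rz in nRsi.
have conn' : connect (Ew w) (sg o w) w by rewrite (sym_connect_sym (@Ew_sym w)).
case/connectP: conn' => p pp lp.
move: lp; case: (shortenP pp) => p' pp' up' _ lp'.
have HE : forall x y, Ew w x y -> exists2 c, c != o & sg c x = y.
  by move=> x y /and3P[_ _ /existsP[c /andP[c0 /eqP <-]]]; exists c.
have [cs [h1 h2 h3]] := path_to_walk HE pp'.
exists cs; rewrite h1 h2 h3 up'; split => //.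
apply: (Ew_all _ pp'); rewrite /Rw /rep black_bip hw /= sgK; exact: connect0.
Qed.


Lemma K_disj w w' b : Bridge w -> Bridge w' -> w != w' -> Kw w b -> Kw w' b -> False.
Proof.
move=> Bw Bw' ww' Kb Kb'.
have hv' : forall y, connect (Dw w') (inl w') y -> y != v.
  move=> y cy; apply/eqP => e; case: Bw' => _ _ /negP; apply; by rewrite -e.
have c1 : connect (Dw w) (inl w') (inl b).
  case/connectP: Kb' => p pp lp; apply/connectP; exists p => //.
  have H : {in connect (Dw w') (inl w') &, subrel (Dw w') (Dw w)}.
    move=> x y Px Py; rewrite /Dw /Sdel => /andP[-> _] /=.
    by rewrite (negbTE (hv' _ Px)) (negbTE (hv' _ Py)) !andbF.
  apply: (sub_in_path H _ pp); apply/allP => y; exact: path_connect pp y.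
have [hw' ow' _] := Bw'.
apply: (Kv Bw (b := w')) => //; last by rewrite eq_sym.
apply: connect_trans Kb _; by rewrite (sym_connect_sym (@Dw_sym w)).
Qed.

Definition wk (b : V) k := iter k (cpi G i) b.
Definition U (b b2 : V) m k y :=
  [exists l : 'I_m.+1, (k <= l) && Rw (wk b l) y] || (y == sg i b2).

Lemma core b1 b2 : black G b1 -> fconnect (cpi G i) b1 b2 -> b1 != b2 ->
  orbit_set G i b1 = O ->
  (forall w, corner_arc G i b1 b2 w -> bridge_tree_side G w v) ->
  exists x cs, [&& path_no0 G x cs, uses_edge G x cs i b1 & uses_edge G x cs i b2].
Proof.
move=> hb1 hsame hdist hO Hbr.
set f := cpi G i.
set m := findex f b1 b2.
have finj : injective f := @cpi_inj _ G i.
have mo : m < order f b1 := findex_max hsame.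
have wm : wk b1 m = b2 := iter_findex hsame.
have m0 : 0 < m.
  rewrite lt0n; apply: contraNneq hdist => e; by rewrite -wm e.
have bw : forall k, black G (wk b1 k) by move=> k; rewrite /wk black_iter.
have ow : forall k, orbit_set G i (wk b1 k) = O by move=> k; rewrite /wk orbit_set_iter.
have winj : forall a b, a < order f b1 -> b < order f b1 -> wk b1 a = wk b1 b -> a = b.
  move=> a b ha hb e; rewrite -(findex_iter ha) -(findex_iter hb).
  by rewrite /wk in e; rewrite e.
have Bk : forall k, 0 < k <= m -> Bridge (wk b1 k).
  move=> k /andP[k0 km]; have := Hbr (wk b1 k).
  case.
    apply/existsP; exists (Ordinal (km : k < m.+1)); by rewrite /= k0 eqxx.
  move=> _ [nc _]; by split.
have iinj : forall n, injective (iter n f).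
  by elim=> [|n IH] x y //= /finj /IH.
have cw : forall k, cpi G i (wk b1 k) != wk b1 k.
  move=> k; apply/eqP => e.
  have fb : f b1 = b1 by apply: (iinj k); rewrite -iterSr iterS.
  by move: hdist; rewrite -wm /wk iter_fix // eqxx.
have ne_w : forall k l, k <= m -> l <= m -> k != l -> wk b1 k != wk b1 l.
  move=> k l km lm kl; apply/eqP => e; move/eqP: kl; apply.
  by apply: winj e; apply: leq_ltn_trans mo.
have wS : forall k, sg i (wk b1 k) = sg o (wk b1 k.+1).
  by move=> k; rewrite /wk iterS /f /cpi sgK.
have nRb1 : forall k, 0 < k <= m -> ~~ Rw (wk b1 k) b1.
  move=> k hk; apply/negP; rewrite /Rw /rep hb1 => K.
  apply: (Kv (Bk k hk) K hb1 _ hO).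
  case/andP: hk => k0 km; apply: (ne_w 0 k) => //; by rewrite eq_sym -lt0n.
have nRb2 : forall k, 0 < k <= m -> ~~ Rw (wk b1 k) (sg i b2).
  move=> k hk; apply/negP; rewrite /Rw /rep black_bip -wm bw /= => K.
  apply: (Kv (Bk k hk) K (bw m.+1) _ (ow m.+1)).
  change (wk b1 m.+1 != wk b1 k).
  case/andP: hk => k0 km.
  have : m.+1 <= order f b1 by [].
  rewrite leq_eqVlt => /orP[/eqP e|lt].
    have -> : wk b1 m.+1 = wk b1 0 by rewrite e /wk (iter_order finj).
    apply: (ne_w 0 k) => //; by rewrite eq_sym -lt0n.
  apply/eqP => e; have := winj _ _ lt (leq_ltn_trans km mo) e.
  by move=> ek; move: km; rewrite -ek ltnn.
have Q : forall d k, m - k = d -> 0 < k <= m -> exists cs,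
   [/\ uniq (wverts G (sg o (wk b1 k)) cs), all (fun c => c != o) cs,
       uses_edge G (sg o (wk b1 k)) cs i b2 & all (U b1 b2 m k) (wverts G (sg o (wk b1 k)) cs)].
  elim=> [|d IH] k hd hk.
    have ekm : k = m.
      by apply/eqP; rewrite eqn_leq (andP hk).2 -subn_eq0 hd.
    subst k.
    have [L [u0 n0 e0 a0]] := local (Bk m hk) (cw m).
    exists (L ++ [:: i]); rewrite wverts_cat e0 /=; split.
    - rewrite cat_uniq u0 /= andbT orbF; apply/negP => /(allP a0).
      by rewrite [in sg i _]wm; apply/negP; apply: nRb2.
    - by rewrite all_cat n0 /= hi.
    - by rewrite /uses_edge wedges_cat e0 has_cat /= wm !eqxx /= orbT.
    - rewrite all_cat; apply/andP; split; last by rewrite /= /U [in sg i _]wm eqxx orbT.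
      apply/allP => y /(allP a0) Ry; rewrite /U.
      by apply/orP; left; apply/existsP; exists ord_max; rewrite /= leqnn Ry.
  have [k0 km] := andP hk.
  have lt : k < m by rewrite -subn_gt0 hd.
  have hd' : m - k.+1 = d by rewrite subnS hd.
  have [cs [u' n' ue' a']] := IH k.+1 hd' (lt : 0 < k.+1 <= m).
  have [L [u0 n0 e0 a0]] := local (Bk k hk) (cw k).
  exists (L ++ i :: cs); rewrite wverts_cat e0 /= wS; split.
  - rewrite cat_uniq u0 u' /= andbT; apply/hasPn => y /(allP a') hU.
    apply/negP => /(allP a0) Ry; move: hU.
    case/orP=> [/existsP[l /andP[kl Rly]] | /eqP ey].
      apply: (K_disj (Bk k hk) (Bk l _) _ Ry Rly).
        by rewrite (leq_trans _ kl) //= -ltnS ltn_ord.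
      by apply: ne_w; rewrite ?(ltnW lt) // ?neq_ltn ?kl // -ltnS ltn_ord.
    by move: Ry; rewrite ey; apply/negP; apply: nRb2; rewrite k0.
  - by rewrite all_cat n0 /= hi.
  - by rewrite /uses_edge wedges_cat e0 has_cat /= wS; move: ue'; rewrite /uses_edge => ->; rewrite !orbT.
  - rewrite all_cat; apply/andP; split.
      apply/allP => y /(allP a0) Ry; apply/orP; left; apply/existsP.
      by exists (Ordinal (km : k < m.+1)); rewrite /= leqnn Ry.
    apply: sub_all a' => y; rewrite /U => /orP[/existsP[l /andP[kl R]]|H]; last by rewrite H orbT.
    by apply/orP; left; apply/existsP; exists l; rewrite (ltnW kl) R.
have [cs [u n ue a]] := Q (m - 1) 1 erefl (m0 : 0 < 1 <= m).
have wS0 : sg i b1 = sg o (wk b1 1) := wS 0.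
exists b1, (i :: cs); apply/and3P; split.
- rewrite /path_no0 /= hi n wS0 u andbT /=.
  rewrite andbT; apply/negP => /(allP a) /orP[/existsP[l /andP[l1 R]] | /eqP e].
    by move: R; apply/negP; apply: nRb1; rewrite l1 -ltnS ltn_ord.
  by move: hb1; rewrite e black_bip -wm bw.
- by rewrite /uses_edge /= !eqxx.
- by rewrite /uses_edge /= wS0; move: ue; rewrite /uses_edge => ->; rewrite orbT.
Qed.

End Local.

Theorem mainTheorem6 (q : nat) (hq : 2 <= q) (G : cgraph q)
    (i : 'I_q.+1) (hi : i != ord0) (b1 b2 : vert G)
    (hb1 : black G b1) (hb2 : black G b2)
    (hsame : fconnect (cpi G i) b1 b2) (hdist : b1 != b2) :
  let v : SV G := inr (i, orbit_set G i b1) in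
  ((forall w, corner_arc G i b1 b2 w -> bridge_tree_side G w v) \/
   (forall w, corner_arc G i b2 b1 w -> bridge_tree_side G w v)) ->
  exists (x : vert G) (cs : seq 'I_q.+1),
    [&& path_no0 G x cs, uses_edge G x cs i b1 & uses_edge G x cs i b2].
Proof.
move=> v [H|H].
  exact: (@core q hq G i hi (orbit_set G i b1) b1 b2 hb1 hsame hdist erefl H).
have hs : fconnect (cpi G i) b2 b1 by rewrite (fconnect_sym (@cpi_inj _ G i)).
have ho : orbit_set G i b2 = orbit_set G i b1 := orbit_set_conn hsame.
have hd : b2 != b1 by rewrite eq_sym.
have [x [cs /and3P[p u1 u2]]] :=
  @core q hq G i hi (orbit_set G i b1) b2 b1 hb2 hs hd ho H.
by exists x, cs; rewrite p u1 u2.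
Qed.
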